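(* Let $n=2^bc$ with $c>1$ odd and $b>1$. Let $D_n=\langle s_1,t_1\mid s_1^2=t_1^{n/2}=1,\ s_1t_1s_1=t_1^{-1}\rangle$ and $D_{2n}=\langle s_2,t_2\mid s_2^2=t_2^n=1,\ s_2t_2s_2=t_2^{-1}\rangle$. Let $(u_i)_{i\in[1,m]}$ be a system of equations over $D_n$, each $u_i$ a word over constants $s_1,t_1,t_1^{-1}$ and variables $X_1^{\pm1},\dots,X_k^{\pm1}$. Let $w_i$ be obtained from $u_i$ by replacing $s_1\mapsto a$, $t_1^{\pm1}\mapsto d^{\pm2}$, each $X_j$ by $g_{0,j}(g_{1,j}dg_{1,j}^{-1})\cdots(g_{n/2,j}dg_{n/2,j}^{-1})$ and each $X_j^{-1}$ by the formal inverse of that word. Let $G_{4c}$ be the group with generators $a,d$ and $g_{i,j}$ ($i\in[0,n/2]$, $j\in[1,k]$) and relators $a^2$, $d^n$, $adad$, $[g,g']$, $[g,a]$, $g^2$, $[[\cdots[[d^c,g],g],\cdots],g]$ (with $b$ occurrences of $g$) for all $g,g'\in\{g_{i,j}\}$, and $w_i$ for $i\in[1,m]$. Then there is a surjective homomorphism $G_{4c}\to D_{2n}$ if and only if the system $(u_i)_{i\in[1,m]}$ has a solution in $D_n$.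
   Context: A solution of a system of equations over a group is an assignment of group elements $h_j$ to the variables $X_j$ (and $h_j^{-1}$ to $X_j^{-1}$) under which every equation evaluates to the identity. $[x,y]=xyx^{-1}y^{-1}$. *)

(* Defs.v *)
From HB Require Import structures.
From mathcomp Require Import all_boot all_order all_algebra all_fingroup.
Set Implicit Arguments. Unset Strict Implicit. Unset Printing Implicit Defensive.
Import GRing.Theory.

(* ---------- Concrete dihedral groups ----------
   Dih m is the dihedral group of order 2m, realised as the group of
   permutations of 'Z_m generated by the rotation x |-> x+1 (order m) and
   the reflection x |-> -x (order 2).  For m >= 3 this is a faithful model of
   < s, t | s^2 = t^m = 1, s t s = t^-1 >.  (Only used with m >= 6.) *)
Definition rotZ (m : nat) : {perm 'Z_m} := perm (@addrI _ (1%R : 'Z_m)).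
Definition reflZ (m : nat) : {perm 'Z_m} := perm (@oppr_inj 'Z_m).

Local Open Scope group_scope.

Definition Dih (m : nat) : {set {perm 'Z_m}} := << [set rotZ m; reflZ m] >>.

Definition comm (gT : finGroupType) (x y : gT) : gT := x * y * x^-1 * y^-1.

Definition itcomm (gT : finGroupType) (x g : gT) (b : nat) : gT :=
  iter b (fun z => comm z g) x.

Inductive ulet (k : nat) : Type :=
| US | UT | UTi | UX of 'I_k & bool.
Arguments US {k}. Arguments UT {k}. Arguments UTi {k}.

Definition uval (gT : finGroupType) (k : nat) (s t : gT) (h : 'I_k -> gT)
  (l : ulet k) : gT :=
  match l with
  | US => s | UT => t | UTi => t^-1
  | UX j e => if e then (h j)^-1 else h j
  end.

Definition ueval (gT : finGroupType) (k : nat) (s t : gT) (h : 'I_k -> gT)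
  (w : seq (ulet k)) : gT := foldr (fun l x => uval s t h l * x) 1 w.

(* A solution of the system us in D_n (n = 2 * half), with s1 = reflection,
   t1 = rotation (of order half = n/2). *)
Definition has_solution_Dn (half k : nat) (us : seq (seq (ulet k))) : Prop :=
  exists h : 'I_k -> {perm 'Z_half},
    (forall j, h j \in Dih half) /\
    (forall i, (i < size us)%N -> ueval (reflZ half) (rotZ half) h (nth [::] us i) = 1).

Inductive glet (half k : nat) : Type :=
| GA of bool | GD of bool | GG of 'I_half.+1 & 'I_k & bool.

Definition ginv half k (l : glet half k) : glet half k :=
  match l with
  | GA e => GA _ _ (~~ e) | GD e => GD _ _ (~~ e) | GG i j e => GG i j (~~ e)
  end.

Definition winv half k (w : seq (glet half k)) := rev (map (@ginv half k) w).

Definition Xword half k (j : 'I_k) : seq (glet half k) :=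
  GG ord0 j false ::
  flatten [seq [:: GG (inord i) j false; GD _ _ false; GG (inord i) j true]
          | i <- iota 1 half].

Definition subst_let half k (l : ulet k) : seq (glet half k) :=
  match l with
  | US => [:: GA _ _ false]
  | UT => [:: GD _ _ false; GD _ _ false]
  | UTi => [:: GD _ _ true; GD _ _ true]
  | UX j false => Xword half j
  | UX j true => winv (Xword half j)
  end.

Definition wsubst half k (u : seq (ulet k)) : seq (glet half k) :=
  flatten (map (@subst_let half k) u).

Definition gval (gT : finGroupType) half k (A D : gT)
  (G : 'I_half.+1 -> 'I_k -> gT) (l : glet half k) : gT :=
  match l with
  | GA e => if e then A^-1 else A
  | GD e => if e then D^-1 else D
  | GG i j e => if e then (G i j)^-1 else G i j
  end.

Definition geval (gT : finGroupType) half k (A D : gT)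
  (G : 'I_half.+1 -> 'I_k -> gT) (w : seq (glet half k)) : gT :=
  foldr (fun l x => gval A D G l * x) 1 w.

(* The assignment a |-> A, d |-> D, g_{i,j} |-> G i j into D_{2n} = Dih n
   kills all relators of G_{4c}, i.e. defines a homomorphism G_{4c} -> D_{2n}
   (von Dyck), and this homomorphism is surjective, i.e. the images of the
   generators generate D_{2n}. *)
Definition G4c_surj_hom (n b c k : nat) (us : seq (seq (ulet k)))
  (A D : {perm 'Z_n}) (G : 'I_(n./2).+1 -> 'I_k -> {perm 'Z_n}) : Prop :=
  [/\ [/\ A \in Dih n, D \in Dih n & (forall i j, G i j \in Dih n)],
      [/\ A ^+ 2 = 1, D ^+ n = 1 & A * D * A * D = 1],
      (forall i j i' j',
         [/\ comm (G i j) (G i' j') = 1, comm (G i j) A = 1,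
             (G i j) ^+ 2 = 1 & itcomm (D ^+ c) (G i j) b = 1]),
      (forall l, (l < size us)%N -> geval A D G (wsubst (n./2) (nth [::] us l)) = 1)
    & << [set A; D] :|: [set G i j | i : 'I_(n./2).+1, j : 'I_k] >> = Dih n].

(* Main.v *)
Require Import Defs.
From mathcomp Require Import all_boot all_order all_algebra all_fingroup.
From mathcomp Require Import zify ring.

Section PartA.
Set Implicit Arguments. Unset Strict Implicit. Unset Printing Implicit Defensive.
Import GRing.Theory.

Lemma zn0n (m : nat) (a : nat) : 1 < m -> ((a%:R : 'Z_m) = 0)%R <-> (m %| a)%N.
Proof.
move=> m1; have := val_Zp_nat m1 a => hv; split.
- move=> h; rewrite h /= in hv.
  by rewrite /dvdn -hv.
- move=> h; apply: val_inj; rewrite /= hv /=.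
  by move/eqP: h.
Qed.

Lemma zn0 (m : nat) (k : int) : 1 < m -> ((k%:~R : 'Z_m) = 0)%R <-> (m %| k)%Z.
Proof.
move=> m1; case: k => a.
- by rewrite -pmulrn dvdzE /=; apply: zn0n.
- rewrite NegzE intrN dvdzE abszN /= -(zn0n _ m1) -pmulrn. split.
  + by move/eqP; rewrite oppr_eq0 => /eqP.
  + by move=> ->; rewrite oppr0.
Qed.

Local Open Scope ring_scope.
Lemma zn_eq (m : nat) (k l : int) : (1 < m)%N ->
  ((k%:~R : 'Z_m) = l%:~R) <-> (exists t : int, k - l = t * m%:Z).
Proof.
move=> m1; split => [h|[t ht]].
- have/(zn0 _ m1) : ((k - l)%:~R : 'Z_m) = 0 by rewrite intrB h subrr.
  by move/dvdzP.
- apply/eqP; rewrite -subr_eq0 -intrB; apply/eqP/(zn0 _ m1)/dvdzP; by exists t.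
Qed.

Definition afff m (e : bool) (k : 'Z_m) (x : 'Z_m) : 'Z_m := (if e then - x else x) + k.
Lemma afff_inj m e k : injective (@afff m e k).
Proof. by move=> x y; rewrite /afff => /addIr; case: e => // /oppr_inj. Qed.
Definition affz m e k : {perm 'Z_m} := perm (@afff_inj m e k).
Definition aff m e (k : int) : {perm 'Z_m} := affz e (k%:~R).

Lemma affE m e k x : aff m e k x = (if e then - x else x) + k%:~R.
Proof. by rewrite /aff /affz permE. Qed.

Local Open Scope group_scope.

Lemma affM m e k e' k' : aff m e k * aff m e' k' =
  aff m (e (+) e') ((if e' then - k else k) + k')%R.
Proof.
apply/permP => x; rewrite permM !affE intrD.
by case: e; case: e' => /=; rewrite ?intrN ?opprD ?opprK ?addrA.
Qed.

Lemma aff1 m : aff m false 0 = 1.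
Proof. by apply/permP => x; rewrite affE perm1 addr0. Qed.

Lemma affV m e k : (aff m e k)^-1 = aff m e (if e then k else - k)%R.
Proof.
apply/eqP; rewrite eq_invg_mul affM addbb -aff1; apply/eqP; congr aff.
by case: e; rewrite ?subrr // addrC subrr.
Qed.

Lemma affX m k j : (aff m false k) ^+ j = aff m false (k * j%:Z)%R.
Proof.
elim: j => [|j IH]; first by rewrite expg0 mulr0 aff1.
by rewrite expgS IH affM /= intS mulrDr mulr1.
Qed.

Lemma aff_congr m e k k' : (1 < m)%N ->
  (exists t : int, k - k' = t * m%:Z)%R -> aff m e k = aff m e k'.
Proof. by move=> m1 /(zn_eq _ _ m1) h; rewrite /aff h. Qed.

Lemma aff_eq m e k e' k' : (2 < m)%N ->
  aff m e k = aff m e' k' -> e = e' /\ (exists t : int, k - k' = t * m%:Z)%R.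
Proof.
move=> m2 h; have m1 : (1 < m)%N by apply: ltnW.
have h0 := congr1 (fun p : {perm 'Z_m} => p 0%R) h.
have h1 := congr1 (fun p : {perm 'Z_m} => p 1%R) h.
rewrite /= !affE oppr0 !if_same !add0r in h0.
rewrite /= !affE h0 in h1; move/addIr: h1 => h1.
split; last by apply/zn_eq.
have e2 : ((2%:Z)%:~R : 'Z_m) = (1 + 1)%R by rewrite -pmulrn mulr2n.
clear h; case: e e' h1 => [] [] // h1.
- have : ((2%:Z)%:~R : 'Z_m) = 0%R by rewrite e2 -{1}h1 addNr.
  move/(zn0 _ m1); rewrite dvdzE /= => /dvdn_leq; by move/(_ isT); rewrite leqNgt m2.
- have : ((2%:Z)%:~R : 'Z_m) = 0%R by rewrite e2 {1}h1 addNr.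
  move/(zn0 _ m1); rewrite dvdzE /= => /dvdn_leq; by move/(_ isT); rewrite leqNgt m2.
Qed.

Lemma rotZ_aff m : rotZ m = aff m false 1.
Proof. by apply/permP => x; rewrite affE /rotZ permE addrC. Qed.
Lemma reflZ_aff m : reflZ m = aff m true 0.
Proof. by apply/permP => x; rewrite affE /reflZ permE addr0. Qed.

Lemma affz_aff m e (x : 'Z_m) : affz e x = aff m e (Posz (val x)).
Proof. by rewrite /aff -pmulrn natr_Zp. Qed.

Definition Affset m := [set p : {perm 'Z_m} | [exists ek : bool * 'Z_m, p == affz ek.1 ek.2]].

Lemma aff_in_Affset m e k : aff m e k \in Affset m.
Proof. by rewrite inE; apply/existsP; exists (e, k%:~R). Qed.

Lemma Affset_aff m p : p \in Affset m -> exists e k, p = aff m e k.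
Proof.
by rewrite inE => /existsP [[e x]] /eqP ->; exists e, (Posz (val x)); rewrite affz_aff.
Qed.

Lemma Affset_group m : group_set (Affset m).
Proof.
apply/group_setP; split; first by rewrite -aff1 aff_in_Affset.
move=> x y /Affset_aff [e [k ->]] /Affset_aff [e' [k' ->]].
by rewrite affM aff_in_Affset.
Qed.

Lemma aff_Dih m e k : aff m e k \in Dih m.
Proof.
have hr : rotZ m \in Dih m by apply: mem_gen; rewrite !inE eqxx.
have hs : reflZ m \in Dih m by apply: mem_gen; rewrite !inE eqxx orbT.
have -> : aff m e k = aff m e 0 * aff m false k by rewrite affM /= add0r addbF.
apply: groupM.
  by case: e; [rewrite -reflZ_aff | rewrite aff1 group1].
case: k => a.
  have -> : aff m false (Posz a) = (rotZ m) ^+ a by rewrite rotZ_aff affX mul1r.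
  exact: groupX.
have -> : aff m false (Negz a) = ((rotZ m) ^+ a.+1)^-1 by rewrite rotZ_aff affX affV mul1r NegzE.
by rewrite groupV groupX.
Qed.

Lemma Dih_aff m p : p \in Dih m -> exists e k, p = aff m e k.
Proof.
move=> hp; apply: Affset_aff.
have : Dih m \subset Group (Affset_group m).
  rewrite gen_subG; apply/subsetP => x; rewrite !inE => /orP [] /eqP ->.
    by rewrite rotZ_aff; apply/existsP; exists (false, 1%:~R).
  by rewrite reflZ_aff; apply/existsP; exists (true, 0%:~R).
by move/subsetP/(_ p hp).
Qed.

Definition eq_ (e : bool) (q : int) : int := if e then q else 0%R.

Definition Kset m (d : int) (q : int) := [set p : {perm 'Z_m} |
  [exists ek : bool * 'Z_m, (p == affz ek.1 ek.2) && (d %| (Posz (val ek.2)) - eq_ ek.1 q)%Z]].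

Lemma aff_in_K m d q e k : (1 < m)%N -> (d %| m%:Z)%Z ->
  (d %| k - eq_ e q)%Z -> aff m e k \in Kset m d q.
Proof.
move=> m1 /dvdzP [r hr] /dvdzP [s hs]; rewrite inE; apply/existsP; exists (e, k%:~R) => /=.
apply/andP; split; first by [].
have : ((Posz (val (k%:~R : 'Z_m)))%:~R : 'Z_m) = k%:~R by rewrite -pmulrn natr_Zp.
move/(zn_eq _ _ m1) => [t ht]; apply/dvdzP; exists (s + t * r)%R.
move: ht hs hr; set x := Posz _; set y := eq_ e q => ht hs hr.
rewrite hr in ht; nia.
Qed.

Lemma K_aff m d q e k : (2 < m)%N -> (d %| m%:Z)%Z ->
  aff m e k \in Kset m d q -> (d %| k - eq_ e q)%Z.
Proof.
move=> m2 /dvdzP [r hr]; rewrite inE => /existsP [[e' x]] /andP [/eqP h] /=.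
rewrite /= affz_aff in h; have [<- [t ht]] := aff_eq m2 h.
move=> /dvdzP [s hs]; apply/dvdzP; exists (s + t * r)%R.
move: ht hs; set y := eq_ e q; set z := Posz _ => ht hs.
rewrite hr in ht; nia.
Qed.

Lemma Kset_P m d q p : p \in Kset m d q ->
  exists e k, p = aff m e k /\ (d %| k - eq_ e q)%Z.
Proof.
rewrite inE => /existsP [[e x]] /andP [/eqP -> /= h].
by exists e, (Posz (val x)); rewrite affz_aff.
Qed.

Lemma K_group m d q : (1 < m)%N -> (d %| m%:Z)%Z -> group_set (Kset m d q).
Proof.
move=> m1 dm; apply/group_setP; split.
  by rewrite -aff1; apply: aff_in_K => //; rewrite /eq_ subrr dvdz0.
move=> x y /Kset_P [e [a [-> /dvdzP [s hs]]]] /Kset_P [e' [a' [-> /dvdzP [s' hs']]]].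
rewrite affM; apply: aff_in_K => //; apply/dvdzP.
exists ((if e' then - s else s) + s')%R.
move: hs hs'; rewrite /eq_.
by case: e; case: e' => /= hs hs'; nia.
Qed.

Section Eval.
Variable gT : finGroupType.

Lemma geval_cat half k (A D : gT) G (w1 w2 : seq (glet half k)) :
  geval A D G (w1 ++ w2) = geval A D G w1 * geval A D G w2.
Proof. by elim: w1 => [|l w IH] /=; rewrite ?mul1g // IH mulgA. Qed.

Lemma gval_inv half k (A D : gT) G (l : glet half k) :
  Defs.gval A D G (ginv l) = (Defs.gval A D G l)^-1.
Proof. by case: l => [e|e|i j e]; case: e => /=; rewrite ?invgK. Qed.

Lemma geval_winv half k (A D : gT) G (w : seq (glet half k)) :
  geval A D G (winv w) = (geval A D G w)^-1.
Proof.
elim: w => [|l w IH]; first by rewrite /= invg1.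
rewrite /winv /= rev_cons -cats1 geval_cat -/(winv w) IH /= mulg1 gval_inv.
by rewrite invMg.
Qed.

Lemma geval_wsubst half k (A D : gT) G (u : seq (ulet k)) :
  geval A D G (wsubst half u) =
  ueval A (D * D) (fun j => geval A D G (Xword half j)) u.
Proof.
elim: u => [|l u IH] //=; rewrite /wsubst /= geval_cat -/(wsubst half u) IH.
congr (_ * _); case: l => [|||j []] /=; rewrite ?mulg1 //.
  by rewrite invMg.
by rewrite geval_winv.
Qed.

Definition blocks half k (j : 'I_k) (L : seq nat) : seq (glet half k) :=
  flatten [seq [:: GG (inord i) j false; GD _ _ false; GG (inord i) j true] | i <- L].

Lemma Xword_blocks half k (j : 'I_k) :
  Xword half j = GG ord0 j false :: blocks half j (iota 1 half).
Proof. by []. Qed.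

Lemma geval_blocks_cons half k (A D : gT) G (j : 'I_k) x L :
  geval A D G (blocks half j (x :: L)) =
  (G (inord x) j * D * (G (inord x) j)^-1) * geval A D G (blocks half j L).
Proof. by rewrite /blocks /= !mulgA. Qed.

Lemma geval_blocks_cat half k (A D : gT) G (j : 'I_k) L1 L2 :
  geval A D G (blocks half j (L1 ++ L2)) =
  geval A D G (blocks half j L1) * geval A D G (blocks half j L2).
Proof. by rewrite /blocks map_cat flatten_cat geval_cat. Qed.

Lemma geval_blocks_const half k (A D : gT) G (j : 'I_k) L g :
  (forall x, x \in L -> G (inord x) j * D * (G (inord x) j)^-1 = g) ->
  geval A D G (blocks half j L) = g ^+ size L.
Proof.
elim: L => [|x L IH] h; first by rewrite expg0.
rewrite geval_blocks_cons h ?mem_head // IH ?expgS //.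
by move=> y hy; apply: h; rewrite in_cons hy orbT.
Qed.

Lemma comm1 (x y : gT) : commute x y -> comm x y = 1.
Proof. by move=> h; rewrite /comm h mulgK mulgV. Qed.

Lemma comm_commute (x y : gT) : comm x y = 1 -> commute x y.
Proof.
rewrite /comm => /eqP; rewrite -eq_mulgV1 => /eqP h.
by rewrite /commute -{2}h mulgKV.
Qed.

End Eval.

Definition rmul (x y : bool * int) : bool * int :=
  (x.1 (+) y.1, (if y.1 then - x.2 else x.2) + y.2)%R.
Definition rinv (x : bool * int) : bool * int := (x.1, if x.1 then x.2 else - x.2)%R.
Definition urval k (rs rt : bool * int) (rh : 'I_k -> bool * int) (l : ulet k) :=
  match l with
  | US => rs | UT => rt | UTi => rinv rt
  | UX j e => if e then rinv (rh j) else rh j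
  end.
Definition urep k rs rt rh (w : seq (ulet k)) : bool * int :=
  foldr (fun l x => rmul (@urval k rs rt rh l) x) (false, 0%R) w.

Definition raff m (x : bool * int) := aff m x.1 x.2.

Lemma ueval_rep m k rs rt rh (w : seq (ulet k)) :
  ueval (raff m rs) (raff m rt) (fun j => raff m (rh j)) w = raff m (urep rs rt rh w).
Proof.
elim: w => [|l w IH] /=; first by rewrite /raff aff1.
rewrite IH; case: l => [|||j []] /=; by rewrite /raff ?affV affM.
Qed.

Definition riota (mu Q : int) (x : bool * int) : bool * int := (x.1, mu * x.2 + eq_ x.1 Q)%R.

Lemma urep_iota k mu Q rs rt rh (w : seq (ulet k)) :
  urep (riota mu Q rs) (riota mu Q rt) (fun j => riota mu Q (rh j)) w =
  riota mu Q (urep rs rt rh w).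
Proof.
have hm : forall x y, rmul (riota mu Q x) (riota mu Q y) = riota mu Q (rmul x y).
  move=> [e a] [e' a']; rewrite /rmul /riota /eq_ /=; congr pair.
  by case: e; case: e' => /=; ring.
have hi : forall x, rinv (riota mu Q x) = riota mu Q (rinv x).
  move=> [e a]; rewrite /rinv /riota /eq_ /=; congr pair.
  by case: e => /=; ring.
elim: w => [|l w IH] /=; first by rewrite /riota /eq_ /= mulr0 addr0.
rewrite IH -hm; congr rmul.
by case: l => [|||j []] //=; rewrite hi.
Qed.

Lemma comm_rot_refl m r k : comm (aff m false r) (aff m true k) = aff m false (r *+ 2).
Proof. by rewrite /comm !affV !affM /=; congr aff; ring. Qed.

Lemma comm_refl_refl m r k : comm (aff m true r) (aff m true k) = aff m false ((k - r) *+ 2).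
Proof. by rewrite /comm !affV !affM /=; congr aff; ring. Qed.

Lemma itcomm_rot_refl m r k j :
  itcomm (aff m false r) (aff m true k) j = aff m false (r * (2 ^ j)%:Z)%R.
Proof.
elim: j => [|j IH]; first by rewrite /= mulr1.
rewrite /itcomm iterS -/(itcomm _ _ j) IH comm_rot_refl; congr aff.
rewrite expnS PoszM; ring.
Qed.

Lemma itcomm_refl_refl m r k j :
  itcomm (aff m true r) (aff m true k) j.+1 = aff m false ((k - r) *+ 2 * (2 ^ j)%:Z)%R.
Proof. by rewrite /itcomm iterSr comm_refl_refl -/(itcomm _ _ j) itcomm_rot_refl. Qed.

Lemma itcomm_1 (gT : finGroupType) (x : gT) j : itcomm x 1 j.+1 = 1.
Proof. by rewrite /itcomm iterS comm1 //; apply: commute1. Qed.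

Lemma aff_one m k : (1 < m)%N -> (exists t : int, k = t * m%:Z)%R -> aff m false k = 1.
Proof.
move=> m1 [t ht]; rewrite -aff1; apply: aff_congr => //; exists t; by rewrite subr0.
Qed.

Lemma eq_ueval (gT : finGroupType) k (s t : gT) h h' (w : seq (ulet k)) :
  (forall j, h j = h' j) -> ueval s t h w = ueval s t h' w.
Proof.
move=> e; elim: w => [|l w IH] //=; rewrite IH; congr (_ * _).
by case: l => [|||j []] //=; rewrite e.
Qed.

Lemma aff_refl_pow m r c : odd c -> (aff m true r) ^+ c = aff m true r.
Proof.
move=> oc; rewrite -(odd_double_half c) oc add1n expgS -mul2n expgM.
have -> : aff m true r ^+ 2 = 1 by rewrite expgS expg1 affM -aff1; congr aff; ring.
by rewrite expg1n mulg1.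
Qed.

End PartA.

Section PartD1.
Set Implicit Arguments. Unset Strict Implicit. Unset Printing Implicit Defensive.
Import GRing.Theory Num.Theory Order.TTheory.
Local Open Scope ring_scope.
Local Open Scope group_scope.

Lemma dir1 (n b c k : nat) (us : seq (seq (ulet k))) (w : nat) :
  n = (2 * n./2)%N -> n./2 = (2 * (w * c))%N -> (2 ^ b = 4 * w)%N -> (0 < w)%N -> (1 < c)%N -> (0 < b)%N ->
  @has_solution_Dn (n./2) k us ->
  exists A D G, @G4c_surj_hom n b c k us A D G.
Proof.
move=> hn hh hb w0 c1 b0 [h [hD heq]].
have n2 : (2 < n)%N by lia.
have h2 : (2 < n./2)%N by lia.
have [rh hrh] : exists rh : 'I_k -> bool * int, forall j, h j = raff (n./2) (rh j).
  apply: (@fin_all_exists _ (fun _ => (bool * int)%type) (fun j ek => h j = raff _ ek)) => j.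
  have [e [a ->]] := Dih_aff (hD j); by exists (e, a).
pose P j := `|(((rh j).2 + (w * c)%:Z) %% (n./2)%:Z)%Z|%N.
have hP : forall j, (P j < n./2)%N /\ exists Q : int, ((rh j).2 + (w*c)%:Z = Q * (n./2)%:Z + (P j)%:Z)%R.
  move=> j; have hpos : (0 < (n./2)%:Z)%R by rewrite ltz_nat; lia.
  have hge := modz_ge0 ((rh j).2 + (w * c)%:Z)%R (lt0r_neq0 hpos).
  have hlt := ltz_pmod ((rh j).2 + (w * c)%:Z)%R hpos.
  have hPz : (P j)%:Z = (((rh j).2 + (w * c)%:Z) %% (n./2)%:Z)%Z by rewrite /P gez0_abs.
  split; first by rewrite -ltz_nat hPz.
  by exists (((rh j).2 + (w * c)%:Z) %/ (n./2)%:Z)%Z; rewrite hPz -divz_eq.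
pose G (i : 'I_(n./2).+1) (j : 'I_k) :=
  aff n (if val i == 0%N then (rh j).1 else (P j < val i)%N) 0%R.
have hblk : forall j (e : bool) x, (0 < x <= n./2)%N -> e = (P j < x)%N ->
    G (inord x) j * rotZ n * (G (inord x) j)^-1 = aff n false (if e then -1 else 1)%R.
  move=> j e x /andP [x0 xh] he; rewrite /G /= inordK ?ltnS //.
  rewrite (negbTE (lt0n_neq0 x0)) -he rotZ_aff affV !affM.
  by congr aff; case: e {he} => /=; rewrite ?addbb //; ring.
have hx : forall j, geval (reflZ n) (rotZ n) G (Xword (n./2) j) = raff n (riota 2 0 (rh j)).
  move=> j; rewrite Xword_blocks /=.
  have [Pl [Q hQ]] := hP j.
  have -> : iota 1 n./2 = iota 1 (P j) ++ iota (1 + P j) (n./2 - P j).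
    by rewrite -iotaD subnKC // ltnW.
  rewrite geval_blocks_cat.
  rewrite (@geval_blocks_const _ _ _ _ _ _ _ _ (aff n false 1)); last first.
    move=> x; rewrite mem_iota => /andP [x1 x2]; rewrite (hblk j false) //; lia.
  rewrite (@geval_blocks_const _ _ _ _ _ _ _ _ (aff n false (-1))); last first.
    move=> x; rewrite mem_iota => /andP [x1 x2]; rewrite (hblk j true) //; lia.
  rewrite !size_iota !affX /G /= /raff /riota /eq_ /= !affM /= addbF if_same.
  apply: aff_congr; first lia.
  exists (- Q)%R.
  have e1 : (n%:Z = 2 * (n./2)%:Z)%R by rewrite {1}hn PoszM.
  have e2 : ((n./2)%:Z = 2 * (w * c)%:Z)%R by rewrite {1}hh PoszM.
  move: hQ e1 e2; rewrite -subzn ?(ltnW Pl) //.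
  move: (n./2)%:Z (P j)%:Z n%:Z (w * c)%:Z (rh j).2 => H PP N WC a hQ e1 e2.
  nia.
have key : forall e e', [/\ comm (aff n e 0%R) (aff n e' 0%R) = 1, comm (aff n e 0%R) (reflZ n) = 1,
    aff n e 0%R ^+ 2 = 1 & itcomm (rotZ n ^+ c) (aff n e 0%R) b = 1].
  move=> e e'; split.
  - apply: comm1; rewrite /commute !affM; congr aff; first by rewrite addbC.
    by rewrite oppr0 !if_same.
  - apply: comm1; rewrite reflZ_aff /commute !affM; congr aff; first by rewrite addbC.
    by rewrite oppr0 !if_same.
  - by rewrite expgS expg1 affM addbb oppr0 if_same addr0 aff1.
  - case: e.
      rewrite rotZ_aff affX itcomm_rot_refl; apply: aff_one; first lia.
      exists 1%R; rewrite !mul1r -PoszM; congr Posz; rewrite hb hn hh; nia.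
    by rewrite aff1; case: b b0 hb => // b' _ _; rewrite itcomm_1.
exists (reflZ n), (rotZ n), G.
split.
- split; [rewrite reflZ_aff; exact: aff_Dih | rewrite rotZ_aff; exact: aff_Dih | move=> i j; exact: aff_Dih].
- split.
  + by rewrite reflZ_aff expgS expg1 affM /= -aff1; congr aff; ring.
  + rewrite rotZ_aff affX; apply: aff_one; [lia | exists 1%R; ring].
  + by rewrite reflZ_aff rotZ_aff !affM /= -aff1; congr aff; ring.
- by move=> i j i' j'; apply: key.
- move=> l hl; rewrite geval_wsubst.
  rewrite (@eq_ueval _ _ _ _ _ (fun j => raff n (riota 2 0 (rh j))) _ hx).
  have := heq l hl; rewrite (@eq_ueval _ _ _ _ _ (fun j => raff (n./2) (rh j)) _ hrh).
  rewrite reflZ_aff rotZ_aff -[aff (n./2) true 0]/(raff (n./2) (true, 0%R)).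
  rewrite -[aff (n./2) false 1]/(raff (n./2) (false, 1%R)) ueval_rep.
  set R := urep _ _ _ _ => hR.
  have [R1 [t Rt]] : R.1 = false /\ exists t : int, (R.2 - 0 = t * (n./2)%:Z)%R.
    by apply: (aff_eq h2); rewrite aff1; exact: hR.
  have -> : reflZ n = raff n (riota 2 0 (true, 0%R)).
    by rewrite reflZ_aff /raff /riota /eq_ /=; congr aff; ring.
  have -> : rotZ n * rotZ n = raff n (riota 2 0 (false, 1%R)).
    by rewrite rotZ_aff affM /raff /riota /eq_ /=; congr aff; ring.
  rewrite ueval_rep urep_iota -/R /raff /riota /= R1 /eq_; apply: aff_one; first lia.
  exists t; rewrite hn PoszM; move: Rt; rewrite subr0 => ->; ring.
- apply/eqP; rewrite eqEsubset; apply/andP; split.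
  + rewrite gen_subG; apply/subsetP => x; rewrite in_setU in_set2.
    case/orP => [/orP [] /eqP -> | /imset2P [i j _ _ ->]].
    * have := aff_Dih n true 0; rewrite -reflZ_aff; exact.
    * have := aff_Dih n false 1; rewrite -rotZ_aff; exact.
    * have := aff_Dih n (if val i == 0%N then (rh j).1 else (P j < val i)%N) 0; exact.
  + rewrite /Dih; apply: genS; apply/subsetP => x; rewrite in_set2 => /orP [] /eqP ->;
    by rewrite in_setU in_set2 eqxx ?orbT.
Qed.
End PartD1.

Section PartD2.
Set Implicit Arguments. Unset Strict Implicit. Unset Printing Implicit Defensive.
Import GRing.Theory Num.Theory Order.TTheory.
Local Open Scope ring_scope.
Local Open Scope group_scope.

Lemma int_small (t x : int) (m : nat) : (0 < `|x| < m)%N -> (x = t * m%:Z)%R -> False.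
Proof.
move=> hx /(congr1 absz); rewrite abszM /=; move: (absz t) (absz x) hx => a y hx h.
case: a h => [|a] h; nia.
Qed.

Lemma aff_is1 m e k : (2 < m)%N -> aff m e k = 1 -> e = false /\ exists t : int, (k = t * m%:Z)%R.
Proof.
move=> m2; rewrite -aff1 => /(aff_eq m2) [-> [t ht]]; split => //; exists t.
by rewrite -ht subr0.
Qed.

Lemma aff_commute m e k e' k' : (2 < m)%N ->
  commute (aff m e k) (aff m e' k') <->
  exists t : int, ((if e' then - k else k) + k' - ((if e then - k' else k') + k) = t * m%:Z)%R.
Proof.
move=> m2; rewrite /commute !affM; split.
  by move/(aff_eq m2) => [_ h].
move=> h; rewrite addbC; apply: aff_congr => //; lia.
Qed.

Lemma rot_refl_ncomm m q : (2 < m)%N -> ~ commute (aff m false 1) (aff m true q).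
Proof.
move=> m2 /(@aff_commute m false 1 true q m2) [t /=] ht.
have : (-2 = t * m%:Z)%R by rewrite -ht; ring.
by move=> {}ht; apply: (int_small _ ht).
Qed.

Lemma commA_form n H e k q : (2 < n)%N -> n = (2 * H)%N ->
  commute (aff n e k) (aff n true q) -> exists y : int, (k - eq_ e q = y * H%:Z)%R.
Proof.
move=> n2 hn /(@aff_commute n e k true q n2) [t ht]; exists (- t)%R.
have e1 : (n%:Z = 2 * H%:Z)%R by rewrite hn PoszM.
rewrite e1 in ht; move: ht; rewrite /eq_; case: e => /= ht; nia.
Qed.

Lemma blocks_rot n half k (A : {perm 'Z_n}) m G (j : 'I_k) (L : seq nat) :
  (forall i j, G i j \in Dih n) ->
  exists t : int, geval A (aff n false m) G (blocks half j L) = aff n false (m * t)%R /\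
    exists s : int, (t - (size L)%:Z = 2 * s)%R.
Proof.
move=> hG; elim: L => [|x L [t [IH [s hs]]]].
  by exists 0%R; split; [rewrite /= mulr0 aff1 | exists 0%R].
rewrite geval_blocks_cons IH.
have [e [kk ->]] := Dih_aff (hG (inord x) j).
exists ((if e then -1 else 1) + t)%R; split.
  by rewrite affV !affM; congr aff; case: e => /=; ring.
exists (if e then s - 1 else s)%R; move: hs => /=.
case: e => /= hs; lia.
Qed.

Lemma dir2 (n b c k : nat) (us : seq (seq (ulet k))) (w : nat) :
  n = (2 * n./2)%N -> n./2 = (2 * (w * c))%N -> (2 ^ b = 4 * w)%N -> (0 < w)%N -> (1 < c)%N ->
  (0 < b)%N -> odd c ->
  (exists A D G, @G4c_surj_hom n b c k us A D G) -> @has_solution_Dn (n./2) k us.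
Proof.
move=> hn hh hb w0 c1 b0 codd [A [D [G [[hA hD hG] [hA2 hDn hAD] hGr heqs hgen]]]].
have n2 : (2 < n)%N by lia.
have h2 : (2 < n./2)%N by lia.
have n1 : (1 < n)%N by lia.
have eN : (n%:Z = 2 * (n./2)%:Z)%R by rewrite {1}hn PoszM.
have eH : ((n./2)%:Z = 2 * (w * c)%:Z)%R by rewrite {1}hh PoszM.
set S := [set A; D] :|: [set G i j | i : 'I_(n./2).+1, j : 'I_k].
have hS : forall P : {perm 'Z_n} -> Prop, P A -> P D -> (forall i j, P (G i j)) ->
    forall x, x \in S -> P x.
  move=> P PA PD PG x; rewrite in_setU in_set2.
  by case/orP => [/orP [] /eqP -> | /imset2P [i j _ _ ->]].
have gen_in : forall K : {group {perm 'Z_n}}, (forall x, x \in S -> x \in K) -> rotZ n \in K.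
  move=> K hK; have : <<S>> \subset K by rewrite gen_subG; apply/subsetP.
  move/subsetP; apply; rewrite hgen rotZ_aff; exact: aff_Dih.
have [eA [qA eqA]] := Dih_aff hA; have [eD [m eqD]] := Dih_aff hD.
subst A D.
have hGA : forall i j, commute (G i j) (aff n eA qA).
  by move=> i j; apply: comm_commute; have [] := hGr i j i j.
have eAt : eA = true.
  case: (boolP eA) => // /negbTE eAf; exfalso; rewrite eAf in hA2 hAD hGA hS.
  move: hA2; rewrite expgS expg1 affM /= => /(aff_is1 n2) [_ [tA htA]].
  case: (boolP eD) => [eDt | /negbTE eDf]; [rewrite eDt in hAD hS hGr | rewrite eDf in hAD hS hGr].
  -
    have cn : (c%:Z %| n%:Z)%Z by apply/dvdzP; exists (4 * w%:Z)%R; lia.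
    have : rotZ n \in Group (K_group m (ltnW n2) cn).
      apply: (gen_in); apply: (hS).
      + apply: aff_in_K => //; rewrite /eq_; apply/dvdzP; exists (tA * 2 * w%:Z)%R; lia.
      + by apply: aff_in_K => //; rewrite /eq_ subrr dvdz0.
      + move=> i j; have [e [kk ekk]] := Dih_aff (hG i j); rewrite ekk.
        have [_ _ hG2 hit] := hGr i j i j; rewrite ekk in hG2 hit.
        apply: aff_in_K => //; case: e ekk hG2 hit => ekk hG2 hit.
        * rewrite aff_refl_pow // in hit.
          have [b' eb] : exists b', b = b'.+1 by exists b.-1; lia.
          rewrite eb itcomm_refl_refl in hit; have [_ [t ht]] := aff_is1 n2 hit.
          have e2 : ((2 ^ b')%:Z = 2 * w%:Z)%R.
            by apply/eqP; rewrite -PoszM eqz_nat; apply/eqP; rewrite eb expnS in hb; lia.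
          have h3 : ((kk - m - t * c%:Z) * (4 * w%:Z) = 0)%R.
            transitivity (((kk - m) *+ 2 * (2 * w%:Z)) - t * (2 * (2 * (w * c)%:Z)))%R.
              by rewrite PoszM; ring.
            by rewrite -e2 ht eN eH subrr.
          move/eqP: h3; rewrite mulf_eq0 => /orP [/eqP h4 | ].
            by rewrite /eq_; apply/dvdzP; exists t; lia.
          by rewrite -PoszM eqz_nat; lia.
        * move: hG2; rewrite expgS expg1 affM /= => /(aff_is1 n2) [_ [t ht]].
          rewrite /eq_ subr0; apply/dvdzP; exists (t * 2 * w%:Z)%R.
          move: ht; rewrite eN eH PoszM; nia.
    rewrite rotZ_aff => /(K_aff n2 cn); rewrite /eq_ subr0 => /dvdzP [t ht].
    by apply: (int_small _ ht) => /=; lia.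
  - move: hAD; rewrite !affM /= => /(aff_is1 n2) [_ [tD htD]].
    have cenA : forall x, x \in Dih n -> commute (aff n false qA) x.
      move=> x /Dih_aff [e [kk ->]]; apply/(@aff_commute n false qA e kk n2).
      by exists (if e then - tA else 0)%R; case: e => /=; lia.
    have cenD : forall x, x \in Dih n -> commute (aff n false m) x.
      move=> x /Dih_aff [e [kk ->]]; apply/(@aff_commute n false m e kk n2).
      by exists (if e then - (tD - tA) else 0)%R; case: e => /=; lia.
    have : abelian (Dih n).
      rewrite -hgen abelian_gen; apply/centsP => x hx y hy.
      move: x hx; apply: (hS).
      + by apply: cenA; move: y hy; apply: (hS) => [||i j]; [rewrite -eAf | rewrite -eDf | ].
      + by apply: cenD; move: y hy; apply: (hS) => [||i j]; [rewrite -eAf | rewrite -eDf | ].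
      + move=> i j; move: y hy; apply: (hS).
        * by apply: commute_sym; apply: cenA.
        * by apply: commute_sym; apply: cenD.
        * by move=> i' j'; apply: comm_commute; have [] := hGr i j i' j'.
    move/centsP => ab; apply: (@rot_refl_ncomm n 0 n2).
    rewrite -rotZ_aff -reflZ_aff; apply: ab; apply: mem_gen; by rewrite !inE eqxx ?orbT.
subst eA.
have eDf : eD = false.
  case: (boolP eD) => [eDt|/negbTE //]; exfalso; rewrite eDt in hAD hS.
  move: hAD; rewrite !affM /= => /(aff_is1 n2) [_ [tD htD]].
  have : rotZ n \in 'C[aff n true qA]%G.
    apply: (gen_in); apply: (hS).
    + exact: cent1id.
    + apply/cent1P; apply/(@aff_commute n true m true qA n2).
      by exists (- tD)%R; lia.
    + by move=> i j; apply/cent1P; apply: hGA.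
  by move/cent1P; rewrite rotZ_aff; apply: rot_refl_ncomm.
subst eD.
set H := (n./2)%:Z.
have [u [v huv]] : exists u v : int, (u * m + v * H = 1)%R.
  set g := gcdz m H.
  have gn : (g %| n%:Z)%Z.
    apply: (dvdz_trans (dvdz_gcdr m H)); apply/dvdzP; exists 2%R; rewrite eN; ring.
  have : rotZ n \in Group (K_group qA n1 gn).
    apply: (gen_in); apply: (hS).
    + by apply: aff_in_K => //; rewrite /eq_ subrr dvdz0.
    + by apply: aff_in_K => //; rewrite /eq_ subr0 dvdz_gcdl.
    + move=> i j; have [e [kk ekk]] := Dih_aff (hG i j); rewrite ekk.
      have := hGA i j; rewrite ekk => /(commA_form n2 hn) [y hy].
      apply: aff_in_K => //; rewrite hy; apply: dvdz_mull; exact: dvdz_gcdr.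
  rewrite rotZ_aff => /(K_aff n2 gn); rewrite /eq_ subr0 dvdz1 => g1.
  have [u [v huv]] := Bezoutz m H; exists u, v; rewrite huv.
  by move: g1; rewrite /g /gcdz /= => /eqP ->.
have [rx hrx] : exists rx : 'I_k -> bool * int, forall j,
    geval (aff n true qA) (aff n false m) G (Xword (n./2) j) = raff n (riota (2 * m) qA (rx j)).
  apply: (@fin_all_exists _ (fun _ => (bool * int)%type) (fun j ek =>
    geval (aff n true qA) (aff n false m) G (Xword (n./2) j) = raff n (riota (2 * m) qA ek))) => j.
  rewrite Xword_blocks /=.
  have [t [-> [s hs]]] := @blocks_rot n (n./2) k (aff n true qA) m G j (iota 1 (n./2)) hG.
  have [e0 [k0 ek0]] := Dih_aff (hG ord0 j).
  have := hGA ord0 j; rewrite ek0 => /(commA_form n2 hn) [y hy].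
  rewrite affM addbF; exists (e0, s + (w * c)%:Z + u * (w * c)%:Z * y)%R.
  rewrite /raff /riota /=; apply: aff_congr => //; exists (y * v * (w * c)%:Z)%R.
  rewrite size_iota -/H in hs.
  have -> : k0 = (y * H + eq_ e0 qA)%R by rewrite -hy; ring.
  have -> : t = (H + 2 * s)%R by rewrite -hs; ring.
  apply/eqP; rewrite -subr_eq0; apply/eqP.
  transitivity ((- 2 * y * (w * c)%:Z) * (u * m + v * H - 1))%R.
    rewrite /H eN eH; ring.
  by rewrite huv subrr mulr0.
exists (fun j => raff (n./2) (rx j)); split.
  by move=> j; apply: aff_Dih.
move=> l hl; have := heqs l hl; rewrite geval_wsubst.
rewrite (@eq_ueval _ _ _ _ _ (fun j => raff n (riota (2 * m) qA (rx j))) _ hrx).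
have -> : aff n true qA = raff n (riota (2 * m) qA (true, 0%R)).
  by rewrite /raff /riota /eq_ /=; congr aff; ring.
have -> : aff n false m * aff n false m = raff n (riota (2 * m) qA (false, 1%R)).
  by rewrite affM /raff /riota /eq_ /=; congr aff; ring.
rewrite ueval_rep urep_iota; set R := urep _ _ _ _.
rewrite /raff /riota /= => /(aff_is1 n2) [R1 [t ht]].
rewrite reflZ_aff rotZ_aff -[aff (n./2) true 0]/(raff (n./2) (true, 0%R)).
rewrite -[aff (n./2) false 1]/(raff (n./2) (false, 1%R)) ueval_rep -/R /raff R1.
apply: aff_one; first lia.
exists (u * t + v * R.2)%R.
rewrite R1 /eq_ addr0 eN -/H in ht.
have e3 : (m * R.2 = t * H)%R.
  apply: (@mulfI _ 2%R) => //; rewrite mulrA ht; ring.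
rewrite -/H; transitivity (R.2 * (u * m + v * H))%R; first by rewrite huv mulr1.
transitivity (u * (m * R.2) + v * H * R.2)%R; first ring.
rewrite e3; ring.
Qed.
End PartD2.

Unset Implicit Arguments.

Theorem lemma7p18 (n b c k : nat) (us : seq (seq (ulet k))) :
  n = 2 ^ b * c -> odd c -> 1 < c -> 1 < b ->
  ((exists (A D : {perm 'Z_n}) (G : 'I_(n./2).+1 -> 'I_k -> {perm 'Z_n}),
      @G4c_surj_hom n b c k us A D G)
   <-> @has_solution_Dn (n./2) k us).
Proof.
move=> hn codd c1 b1.
have [b' eb] : exists b', b = b'.+2 by exists b.-2; lia.
set w := 2 ^ b'.
have w0 : 0 < w by rewrite expn_gt0.
have en : n = (2 * (w * c)).*2.
  rewrite hn eb !expnS -/w -mul2n; nia.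
have hh : n./2 = 2 * (w * c) by rewrite en doubleK.
have hn' : n = 2 * n./2 by rewrite hh; lia.
have hb : 2 ^ b = 4 * w by rewrite eb !expnS -/w; lia.
split.
  by apply: (@dir2 n b c k us w) => //; lia.
by apply: (@dir1 n b c k us w) => //; lia.
Qed.
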